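(* Let $n\ge5$ and consider generic twisted $n$-gons modulo projective equivalence with corner invariants $(x_1,y_1,\dots,x_n,y_n)$. The functions $O_n=\prod_{i=1}^n x_i$ and $E_n=\prod_{i=1}^n y_i$ are invariant under the pentagram map. When $n$ is even, the functions $O_{n/2}=\prod_{i\text{ even}}x_i+\prod_{i\text{ odd}}x_i$ and $E_{n/2}=\prod_{i\text{ even}}y_i+\prod_{i\text{ odd}}y_i$ (products over $1\le i\le n$) are also invariant under the pentagram map.
   Context: A twisted $n$-gon is a map $\phi:\mathbb{Z}\to\mathbb{RP}^2$ with $\phi(k+n)=M\circ\phi(k)$ for all $k$, for a fixed $M\in\mathrm{PGL}(3,\mathbb{R})$, such that $v_{i-1},v_i,v_{i+1}$ are in general position for all $i$, where $v_i=\phi(i)$. The cross ratio of four collinear points is $[t_1,t_2,t_3,t_4]=\frac{(t_1-t_2)(t_3-t_4)}{(t_1-t_3)(t_2-t_4)}$ in an affine parameter $t$ on the line. Writing $(p,q)$ for the line through $p,q$, the corner invariants are $x_i=[v_{i-2},v_{i-1},(v_{i-2},v_{i-1})\cap(v_i,v_{i+1}),(v_{i-2},v_{i-1})\cap(v_{i+1},v_{i+2})]$ and $y_i=[(v_{i-2},v_{i-1})\cap(v_{i+1},v_{i+2}),(v_{i-1},v_i)\cap(v_{i+1},v_{i+2}),v_{i+1},v_{i+2}]$; they are $n$-periodic and projectively invariant, giving coordinates on the space of generic twisted $n$-gons modulo projective equivalence. The pentagram map $T$ sends $\phi$ to the twisted $n$-gon whose vertices are the intersection points $(v_i,v_{i+2})\cap(v_{i+1},v_{i+3})$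 of consecutive shortest diagonals, with a fixed labelling convention (index shift). *)

(* Defs.v *)
(* Points of RP^2 are represented by nonzero lifts in R^3
   (triples); all notions below are homogeneous of degree 0 in each lift,
   so they only depend on the projective points. *)
From HB Require Import structures.
From mathcomp Require Import all_boot all_order all_algebra.
Set Implicit Arguments. Unset Strict Implicit. Unset Printing Implicit Defensive.
Import Order.TTheory GRing.Theory Num.Theory.
Local Open Scope ring_scope.

Section Pentagram.
Variable R : realFieldType.

Definition vec := (R * R * R)%type.

Definition cross (u v : vec) : vec :=
  let: (u1, u2, u3) := u in let: (v1, v2, v3) := v in
  (u2 * v3 - u3 * v2, u3 * v1 - u1 * v3, u1 * v2 - u2 * v1).

Definition dot (u v : vec) : R :=
  let: (u1, u2, u3) := u in let: (v1, v2, v3) := v in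
  u1 * v1 + u2 * v2 + u3 * v3.

Definition scale (c : R) (u : vec) : vec :=
  let: (u1, u2, u3) := u in (c * u1, c * u2, c * u3).

Definition det3 (u v w : vec) : R := dot (cross u v) w.

Definition mxapp (m1 m2 m3 : vec) (v : vec) : vec := (dot m1 v, dot m2 v, dot m3 v).

(* (a,b) cap (c,d): intersection of the line through a,b and the line
   through c,d *)
Definition meet (a b c d : vec) : vec := cross (cross a b) (cross c d).

(* For points p, q on a line whose (nonzero) normal vector is u,
   p x q = D u p q * (u/|u|^2)-direction; in an affine parameter t on the
   line (lift p = A + t B) one has D u p q = c * (t_q - t_p) with c <> 0. *)
Definition Dl (u p q : vec) : R := dot (cross p q) u.

(* cross ratio [p1,p2,p3,p4] = (t1-t2)(t3-t4)/((t1-t3)(t2-t4)) of four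
   points on the line with normal u, written homogeneously *)
Definition crossratio (u p1 p2 p3 p4 : vec) : R :=
  Dl u p1 p2 * Dl u p3 p4 / (Dl u p1 p3 * Dl u p2 p4).

Definition cr_defined (u p1 p2 p3 p4 : vec) : bool :=
  (Dl u p1 p3 != 0) && (Dl u p2 p4 != 0).

Definition x_args (V : int -> vec) (i : int) :=
  let A := V (i - 2) in let B := V (i - 1) in
  (cross A B, A, B, meet A B (V i) (V (i + 1)), meet A B (V (i + 1)) (V (i + 2))).

Definition y_args (V : int -> vec) (i : int) :=
  let C := V (i + 1) in let E := V (i + 2) in
  (cross C E, meet (V (i - 2)) (V (i - 1)) C E, meet (V (i - 1)) (V i) C E, C, E).

Definition xinv (V : int -> vec) (i : int) : R :=
  let: (u, p1, p2, p3, p4) := x_args V i in crossratio u p1 p2 p3 p4.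
Definition yinv (V : int -> vec) (i : int) : R :=
  let: (u, p1, p2, p3, p4) := y_args V i in crossratio u p1 p2 p3 p4.

Definition corner_defined (V : int -> vec) (i : int) : bool :=
  (let: (u, p1, p2, p3, p4) := x_args V i in cr_defined u p1 p2 p3 p4) &&
  (let: (u, p1, p2, p3, p4) := y_args V i in cr_defined u p1 p2 p3 p4).

Definition twisted_ngon (n : nat) (V : int -> vec) : Prop :=
  (exists m1 m2 m3 : vec, det3 m1 m2 m3 != 0 /\
     forall k : int, exists2 c : R, c != 0 &
       V (k + n%:Z) = scale c (mxapp m1 m2 m3 (V k))) /\
  (forall i : int, det3 (V (i - 1)) (V i) (V (i + 1)) != 0).

Definition generic_ngon (n : nat) (V : int -> vec) : Prop :=
  twisted_ngon n V /\ forall i : int, corner_defined V i.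

Definition pentagram (V : int -> vec) : int -> vec :=
  fun i => meet (V i) (V (i + 2)) (V (i + 1)) (V (i + 3)).

Definition O_n (n : nat) (V : int -> vec) : R :=
  \prod_(1 <= i < n.+1) xinv V i%:Z.
Definition E_n (n : nat) (V : int -> vec) : R :=
  \prod_(1 <= i < n.+1) yinv V i%:Z.
Definition O_half (n : nat) (V : int -> vec) : R :=
  \prod_(1 <= i < n.+1 | ~~ odd i) xinv V i%:Z +
  \prod_(1 <= i < n.+1 | odd i) xinv V i%:Z.
Definition E_half (n : nat) (V : int -> vec) : R :=
  \prod_(1 <= i < n.+1 | ~~ odd i) yinv V i%:Z +
  \prod_(1 <= i < n.+1 | odd i) yinv V i%:Z.

End Pentagram.

(* Main.v *)
Require Import Defs.
From HB Require Import structures.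
From mathcomp Require Import all_boot all_order all_algebra.
From mathcomp Require Import ring lra zify.
Import Order.TTheory GRing.Theory Num.Theory.
Local Open Scope ring_scope.
Section S.
Variable R : realFieldType.
Implicit Types p q r s t a b c d e x y z m v : vec R.
Ltac vsplit := repeat match goal with v : vec R |- _ => move: v => [[? ?] ?] end.
Ltac vring := vsplit; rewrite /Dl /meet /det3 /cross /dot /scale /mxapp /=; ring.
Lemma V2 p q r s t : Dl (cross p q) (meet p q r s) (meet p q s t) = det3 r s t * det3 p q s * dot (cross p q) (cross p q).
Proof. vring. Qed.
Lemma V3 p q r s : Dl (cross p q) p (meet p q r s) = det3 p r s * dot (cross p q) (cross p q).
Proof. vring. Qed.
Lemma V4 p q s t : Dl (cross p q) q (meet p q s t) = det3 q s t * dot (cross p q) (cross p q).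
Proof. vring. Qed.
Lemma Y1 p q r s t : Dl (cross s t) (meet p q s t) (meet q r s t) = det3 p q r * det3 q s t * dot (cross s t) (cross s t).
Proof. vring. Qed.
Lemma Y3 p q s t : Dl (cross s t) (meet p q s t) s = det3 p q s * dot (cross s t) (cross s t).
Proof. vring. Qed.
Lemma Y4 q r s t : Dl (cross s t) (meet q r s t) t = det3 q r t * dot (cross s t) (cross s t).
Proof. vring. Qed.
Lemma crossWW a b c d e : cross (meet a c b d) (meet b d c e) = scale (det3 a c e * det3 b c d) (cross b d).
Proof. vsplit; rewrite /meet /det3 /cross /dot /scale /=; congr (_,_,_); ring. Qed.
Lemma dotZ (k : R) a b : dot (scale k a) b = k * dot a b.
Proof. vring. Qed.
Lemma det3_dot a b c : det3 a b c = dot a (cross b c).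
Proof. vring. Qed.
Lemma aux1 v1 v2 v3 v4 v5 : dot (cross v1 v3) (meet v2 v4 v3 v5) = det3 v1 v3 v5 * det3 v2 v3 v4.
Proof. vring. Qed.
Lemma aux2 v1 v3 v4 v5 v6 : dot (cross v1 v3) (meet v3 v5 v4 v6) = det3 v1 v3 v5 * det3 v3 v4 v6.
Proof. vring. Qed.
Lemma aux3 v0 v1 v2 v3 v5 : dot (meet v0 v2 v1 v3) (cross v3 v5) = det3 v0 v2 v3 * det3 v1 v3 v5.
Proof. vring. Qed.
Lemma det3_tw m1 m2 m3 x y z (c1 c2 c3 : R) :
  det3 (scale c1 (mxapp m1 m2 m3 x)) (scale c2 (mxapp m1 m2 m3 y)) (scale c3 (mxapp m1 m2 m3 z))
  = c1 * c2 * c3 * det3 m1 m2 m3 * det3 x y z.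
Proof. vring. Qed.
Lemma dotZr (k : R) a b : dot a (scale k b) = k * dot a b.
Proof. vring. Qed.
Lemma AW v0 v1 v2 v3 v4 v5 : det3 (meet v0 v2 v1 v3) (meet v1 v3 v2 v4) (meet v2 v4 v3 v5)
  = det3 v0 v2 v4 * det3 v1 v3 v5 * det3 v1 v2 v3 * det3 v2 v3 v4.
Proof. rewrite {1}/det3 crossWW dotZ aux1; ring. Qed.
Lemma BW v0 v1 v2 v3 v4 v5 v6 : det3 (meet v0 v2 v1 v3) (meet v1 v3 v2 v4) (meet v3 v5 v4 v6)
  = det3 v0 v2 v4 * det3 v1 v2 v3 * det3 v1 v3 v5 * det3 v3 v4 v6.
Proof. rewrite {1}/det3 crossWW dotZ aux2; ring. Qed.
Lemma CW v0 v1 v2 v3 v4 v5 v6 : det3 (meet v0 v2 v1 v3) (meet v2 v4 v3 v5) (meet v3 v5 v4 v6)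
  = det3 v2 v4 v6 * det3 v3 v4 v5 * det3 v0 v2 v3 * det3 v1 v3 v5.
Proof. rewrite det3_dot crossWW dotZr aux3; ring. Qed.
End S.

Set Implicit Arguments. Unset Strict Implicit.

Ltac normF F i :=
  let W := fresh "W" in
  pose W := (fun k : int => F (i + k));
  repeat match goal with
  | |- context [F ?e] =>
    first [ replace (F e) with (W 0) by (rewrite /W /=; f_equal; ring)
          | replace (F e) with (W 1) by (rewrite /W /=; f_equal; ring)
          | replace (F e) with (W 2) by (rewrite /W /=; f_equal; ring)
          | replace (F e) with (W 3) by (rewrite /W /=; f_equal; ring)
          | replace (F e) with (W 4) by (rewrite /W /=; f_equal; ring)
          | replace (F e) with (W 5) by (rewrite /W /=; f_equal; ring)
          | replace (F e) with (W 6) by (rewrite /W /=; f_equal; ring)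
          | replace (F e) with (W 7) by (rewrite /W /=; f_equal; ring)
          | replace (F e) with (W (-1)) by (rewrite /W /=; f_equal; ring)
          | replace (F e) with (W (-2)) by (rewrite /W /=; f_equal; ring)
          | replace (F e) with (W (-3)) by (rewrite /W /=; f_equal; ring)
          | replace (F e) with (W (-4)) by (rewrite /W /=; f_equal; ring) ]
  | H : context [F ?e] |- _ =>
    first [ replace (F e) with (W 0) in H by (rewrite /W /=; f_equal; ring)
          | replace (F e) with (W 1) in H by (rewrite /W /=; f_equal; ring)
          | replace (F e) with (W 2) in H by (rewrite /W /=; f_equal; ring)
          | replace (F e) with (W 3) in H by (rewrite /W /=; f_equal; ring)
          | replace (F e) with (W 4) in H by (rewrite /W /=; f_equal; ring)
          | replace (F e) with (W 5) in H by (rewrite /W /=; f_equal; ring)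
          | replace (F e) with (W 6) in H by (rewrite /W /=; f_equal; ring)
          | replace (F e) with (W 7) in H by (rewrite /W /=; f_equal; ring)
          | replace (F e) with (W (-1)) in H by (rewrite /W /=; f_equal; ring)
          | replace (F e) with (W (-2)) in H by (rewrite /W /=; f_equal; ring)
          | replace (F e) with (W (-3)) in H by (rewrite /W /=; f_equal; ring)
          | replace (F e) with (W (-4)) in H by (rewrite /W /=; f_equal; ring) ]
  end.

Section S2.
Variable R : realFieldType.
Implicit Types V : int -> vec R.
Definition Ab V j := det3 (V j) (V (j+1)) (V (j+2)).
Definition Bb V j := det3 (V j) (V (j+1)) (V (j+3)).
Definition Cb V j := det3 (V j) (V (j+2)) (V (j+3)).
Definition Gb V j := det3 (V j) (V (j+2)) (V (j+4)).

Lemma xvec (p q r s t : vec R) : cr_defined (cross p q) p q (meet p q r s) (meet p q s t) ->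
  crossratio (cross p q) p q (meet p q r s) (meet p q s t) = det3 r s t * det3 p q s / (det3 p r s * det3 q s t)
  /\ det3 p r s != 0 /\ det3 q s t != 0.
Proof.
rewrite /cr_defined /crossratio V2 V3 V4.
rewrite [Dl _ p q]/Dl.
set N := dot (cross p q) (cross p q).
move=> /andP[]; rewrite !mulf_eq0 !negb_or => /andP[h1 h2] /andP[h3 _].
split; last by [].
field. by rewrite h1 h2 h3.
Qed.

Lemma yvec (p q r s t : vec R) : cr_defined (cross s t) (meet p q s t) (meet q r s t) s t ->
  crossratio (cross s t) (meet p q s t) (meet q r s t) s t = det3 p q r * det3 q s t / (det3 p q s * det3 q r t)
  /\ det3 p q s != 0 /\ det3 q r t != 0.
Proof.
rewrite /cr_defined /crossratio Y1 Y3 Y4.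
rewrite [Dl _ s t]/Dl.
set N := dot (cross s t) (cross s t).
move=> /andP[]; rewrite !mulf_eq0 !negb_or => /andP[h1 h2] /andP[h3 _].
split; last by [].
field. by rewrite h1 h2 h3.
Qed.

Lemma xform V i : corner_defined V i ->
  xinv V i = Ab V i * Bb V (i-2) / (Cb V (i-2) * Cb V (i-1)) /\ Cb V (i-2) != 0 /\ Cb V (i-1) != 0.
Proof.
rewrite /corner_defined /xinv /x_args /Ab /Bb /Cb /= => /andP[H _].
normF V i.
exact: xvec H.
Qed.

Lemma yform V i : corner_defined V i ->
  yinv V i = Ab V (i-2) * Cb V (i-1) / (Bb V (i-2) * Bb V (i-1)) /\ Bb V (i-2) != 0 /\ Bb V (i-1) != 0.
Proof.
rewrite /corner_defined /yinv /y_args /Ab /Bb /Cb /= => /andP[_ H].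
normF V i.
exact: yvec H.
Qed.

Lemma AbT V j : Ab (pentagram V) j = Gb V j * Gb V (j+1) * Ab V (j+1) * Ab V (j+2).
Proof. rewrite /Ab /Gb /pentagram. normF V j. exact: AW. Qed.
Lemma BbT V j : Bb (pentagram V) j = Gb V j * Ab V (j+1) * Gb V (j+1) * Bb V (j+3).
Proof. rewrite /Ab /Bb /Gb /pentagram. normF V j. exact: BW. Qed.
Lemma CbT V j : Cb (pentagram V) j = Gb V (j+2) * Ab V (j+3) * Cb V j * Gb V (j+1).
Proof. rewrite /Ab /Cb /Gb /pentagram. normF V j. exact: CW. Qed.

Definition mm V j := Gb V j * Cb V (j-1) / (Bb V (j-1) * Bb V (j+1)).
Definition ll V j := Bb V (j-1) * Bb V j * Bb V (j+1) / (Gb V j * Ab V (j-1) * Ab V (j+1)).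

Ltac nzside nzA nzB nzC nzG :=
  repeat (apply/andP; split); by [apply: nzA|apply: nzB|apply: nzC|apply: nzG].

Lemma xrel V i : corner_defined V (i-1) -> corner_defined (pentagram V) i ->
  (forall j, Ab V j != 0) -> (forall j, Bb V j != 0) -> (forall j, Cb V j != 0) -> (forall j, Gb V j != 0) ->
  xinv (pentagram V) i = xinv V (i-1) * mm V (i-2) / mm V i.
Proof.
move=> cdV cdT nzA nzB nzC nzG.
rewrite (xform cdT).1 (xform cdV).1 AbT !BbT !CbT /mm.
normF (Ab V) i. normF (Bb V) i. normF (Cb V) i. normF (Gb V) i.
field. nzside nzA nzB nzC nzG.
Qed.

Lemma yrel V i : corner_defined V i -> corner_defined (pentagram V) i ->
  (forall j, Ab V j != 0) -> (forall j, Bb V j != 0) -> (forall j, Cb V j != 0) -> (forall j, Gb V j != 0) ->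
  yinv (pentagram V) i = yinv V i * ll V (i-1) / ll V (i+1).
Proof.
move=> cdV cdT nzA nzB nzC nzG.
rewrite (yform cdT).1 (yform cdV).1 AbT !BbT !CbT /ll.
normF (Ab V) i. normF (Bb V) i. normF (Cb V) i. normF (Gb V) i.
field. nzside nzA nzB nzC nzG.
Qed.
End S2.

Ltac normW F W :=
  repeat match goal with
  | |- context [F ?e] =>
    first [ replace (F e) with (W 0) by (rewrite /W /=; f_equal; ring)
          | replace (F e) with (W 1) by (rewrite /W /=; f_equal; ring)
          | replace (F e) with (W 2) by (rewrite /W /=; f_equal; ring)
          | replace (F e) with (W 3) by (rewrite /W /=; f_equal; ring)
          | replace (F e) with (W 4) by (rewrite /W /=; f_equal; ring)
          | replace (F e) with (W 5) by (rewrite /W /=; f_equal; ring)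
          | replace (F e) with (W (-1)) by (rewrite /W /=; f_equal; ring)
          | replace (F e) with (W (-2)) by (rewrite /W /=; f_equal; ring) ]
  | H : context [F ?e] |- _ =>
    first [ replace (F e) with (W 0) in H by (rewrite /W /=; f_equal; ring)
          | replace (F e) with (W 1) in H by (rewrite /W /=; f_equal; ring)
          | replace (F e) with (W 2) in H by (rewrite /W /=; f_equal; ring)
          | replace (F e) with (W 3) in H by (rewrite /W /=; f_equal; ring)
          | replace (F e) with (W 4) in H by (rewrite /W /=; f_equal; ring)
          | replace (F e) with (W 5) in H by (rewrite /W /=; f_equal; ring)
          | replace (F e) with (W (-1)) in H by (rewrite /W /=; f_equal; ring)
          | replace (F e) with (W (-2)) in H by (rewrite /W /=; f_equal; ring) ]
  end.

Ltac twk Htw j WU W k :=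
  let c := fresh "c" in let hc := fresh "hc" in let e := fresh "e" in
  have [c hc e] := Htw (j + k);
  let e' := fresh "e" in
  have e' : WU k = scale c (mxapp _ _ _ (W k)) := e; rewrite e'; clear e e'.

Section S3.
Variable R : realFieldType.
Implicit Types V : int -> vec R.

Definition twist_hyp V (n : nat) (m1 m2 m3 : vec R) :=
  forall k : int, exists2 c : R, c != 0 & V (k + n%:Z) = scale c (mxapp m1 m2 m3 (V k)).

Lemma mm_per V n m1 m2 m3 j : det3 m1 m2 m3 != 0 -> twist_hyp V n m1 m2 m3 ->
  (forall j, Bb V j != 0) -> (forall j, Cb V j != 0) -> (forall j, Gb V j != 0) ->
  mm V (j + n%:Z) = mm V j.
Proof.
move=> hd Htw nzB nzC nzG.
have h1 := nzB (j-1); have h2 := nzB (j+1).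
rewrite /mm /Gb /Bb /Cb in h1 h2 *.
pose WU := fun k : int => V (j + k + n%:Z).
pose W := fun k : int => V (j + k).
normW V WU. normW V W.
twk Htw j WU W (-1 : int). twk Htw j WU W (0:int). twk Htw j WU W (1:int). twk Htw j WU W (2:int). twk Htw j WU W (4:int).
rewrite !det3_tw.
field; by repeat (apply/andP; split).
Qed.

Lemma ll_per V n m1 m2 m3 j : det3 m1 m2 m3 != 0 -> twist_hyp V n m1 m2 m3 ->
  (forall j, Ab V j != 0) -> (forall j, Gb V j != 0) ->
  ll V (j + n%:Z) = ll V j.
Proof.
move=> hd Htw nzA nzG.
have h1 := nzG j; have h2 := nzA (j-1); have h3 := nzA (j+1).
rewrite /ll /Gb /Bb /Ab in h1 h2 h3 *.
pose WU := fun k : int => V (j + k + n%:Z).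
pose W := fun k : int => V (j + k).
normW V WU. normW V W.
twk Htw j WU W (-1 : int). twk Htw j WU W (0:int). twk Htw j WU W (1:int). twk Htw j WU W (2:int).
twk Htw j WU W (3:int). twk Htw j WU W (4:int).
rewrite !det3_tw.
field; by repeat (apply/andP; split).
Qed.

Definition xf V j := Ab V j * Bb V (j-2) / (Cb V (j-2) * Cb V (j-1)).

Lemma xf_per V n m1 m2 m3 j : det3 m1 m2 m3 != 0 -> twist_hyp V n m1 m2 m3 ->
  (forall j, Cb V j != 0) -> xf V (j + n%:Z) = xf V j.
Proof.
move=> hd Htw nzC.
have h1 := nzC (j-2); have h2 := nzC (j-1).
rewrite /xf /Cb /Bb /Ab in h1 h2 *.
pose WU := fun k : int => V (j + k + n%:Z).
pose W := fun k : int => V (j + k).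
normW V WU. normW V W.
twk Htw j WU W (-2 : int). twk Htw j WU W (-1 : int). twk Htw j WU W (0:int). twk Htw j WU W (1:int). twk Htw j WU W (2:int).
rewrite !det3_tw.
field; by repeat (apply/andP; split).
Qed.
End S3.
Section S4.
Variable R : realFieldType.

Lemma tele (g r : int -> R) n : (forall k, r k != 0) -> (forall i, g i = r (i-1) / r i) ->
  \prod_(1 <= i < n.+1) g i%:Z = r 0%:Z / r n%:Z.
Proof.
move=> nz hg; elim: n => [|n IH]; first by rewrite big_geq // divff.
rewrite big_nat_recr //= IH hg (_ : (n.+1)%:Z - 1 = n%:Z); last by lia.
field; by rewrite !nz.
Qed.

Lemma shift1 (f : int -> R) n :
  \prod_(1 <= i < n.+1) f (i%:Z - 1) * f n%:Z = f 0%:Z * \prod_(1 <= i < n.+1) f i%:Z.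
Proof.
elim: n => [|n IH]; first by rewrite !big_geq // mul1r mulr1.
rewrite big_nat_recr //= (_ : (n.+1)%:Z - 1 = n%:Z); last by lia.
by rewrite IH -mulrA -big_nat_recr.
Qed.

Lemma prod_even (F : int -> R) k :
  \prod_(1 <= i < (2*k).+1 | ~~ odd i) F i%:Z = \prod_(1 <= j < k.+1) F (2 * j%:Z).
Proof.
elim: k => [|k IH]; first by rewrite !big_geq.
rewrite (_ : (2 * k.+1).+1 = (2*k).+3)%N; last by lia.
rewrite big_mkcond big_nat_recr // big_nat_recr // -big_mkcond IH [in RHS]big_nat_recr //=.
rewrite oddM /= mulr1; congr (_ * F _); lia.
Qed.

Lemma prod_odd (F : int -> R) k :
  \prod_(1 <= i < (2*k).+1 | odd i) F i%:Z = \prod_(1 <= j < k.+1) F (2 * j%:Z - 1).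
Proof.
elim: k => [|k IH]; first by rewrite !big_geq.
rewrite (_ : (2 * k.+1).+1 = (2*k).+3)%N; last by lia.
rewrite big_mkcond big_nat_recr // big_nat_recr // -big_mkcond IH [in RHS]big_nat_recr //=.
rewrite oddM /= mulr1; congr (_ * F _); lia.
Qed.
End S4.

Section S5.
Variable R : realFieldType.
Implicit Types V : int -> vec R.

Lemma prod_tel (a g r : int -> R) n : (forall k, r k != 0) -> (forall i, g i = r (i-1) / r i) ->
  r n%:Z = r 0%:Z -> \prod_(1 <= i < n.+1) (a i%:Z * g i%:Z) = \prod_(1 <= i < n.+1) a i%:Z.
Proof.
move=> nz hg hr; rewrite big_split /= (tele n nz hg) hr divff ?mulr1 //.
Qed.

Lemma nzA_of V : (forall i, det3 (V (i-1)) (V i) (V (i+1)) != 0) -> forall j, Ab V j != 0.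
Proof. move=> h j; have h1 := h (j+1); clear h; rewrite /Ab; normF V j; exact h1. Qed.

Lemma nzB_of V : (forall i, corner_defined V i) -> forall j, Bb V j != 0.
Proof.
move=> h j; have [_ [hB _]] := yform (h (j+2)).
have e : j + 2 - 2 = j by ring. by rewrite e in hB.
Qed.

Lemma nzC_of V : (forall i, corner_defined V i) -> forall j, Cb V j != 0.
Proof.
move=> h j; have [_ [hC _]] := xform (h (j+2)).
have e : j + 2 - 2 = j by ring. by rewrite e in hC.
Qed.

Lemma nzG_of V : (forall i, det3 (pentagram V (i-1)) (pentagram V i) (pentagram V (i+1)) != 0) ->
  forall j, Gb V j != 0.
Proof.
move=> h j; have := nzA_of h j; rewrite AbT !mulf_eq0 !negb_or.
by case/andP=> /andP[/andP[]]. 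
Qed.

Lemma mm_nz V j : (forall j, Bb V j != 0) -> (forall j, Cb V j != 0) -> (forall j, Gb V j != 0) -> mm V j != 0.
Proof. move=> nzB nzC nzG. by rewrite /mm !mulf_neq0 ?invr_neq0 ?mulf_neq0. Qed.

Lemma ll_nz V j : (forall j, Ab V j != 0) -> (forall j, Bb V j != 0) -> (forall j, Gb V j != 0) -> ll V j != 0.
Proof. move=> nzA nzB nzG. by rewrite /ll !mulf_neq0 ?invr_neq0 ?mulf_neq0. Qed.

Lemma xf_nz V j : (forall j, Ab V j != 0) -> (forall j, Bb V j != 0) -> (forall j, Cb V j != 0) -> xf V j != 0.
Proof. move=> nzA nzB nzC. by rewrite /xf !mulf_neq0 ?invr_neq0 ?mulf_neq0. Qed.
End S5.

Theorem corollary2 (R : realFieldType) (n : nat) (V : int -> vec R) :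
  (5 <= n)%N ->
  generic_ngon n V ->
  generic_ngon n (pentagram V) ->
  O_n n (pentagram V) = O_n n V /\
  E_n n (pentagram V) = E_n n V /\
  (~~ odd n ->
     O_half n (pentagram V) = O_half n V /\
     E_half n (pentagram V) = E_half n V).
Proof.
rewrite /generic_ngon /twisted_ngon.
move=> hn [[tw hAV] cdV] [[_ hAT] cdT].
case: tw => m1 [m2 [m3 [hd Htw]]].
have Htw' : twist_hyp V n m1 m2 m3 := Htw.
have nzA := nzA_of hAV. have nzB := nzB_of cdV. have nzC := nzC_of cdV. have nzG := nzG_of hAT.
have mmnz : forall j, mm V j != 0 by move=> j; apply: mm_nz.
have llnz : forall j, ll V j != 0 by move=> j; apply: ll_nz.
have xfnz : forall j, xf V j != 0 by move=> j; apply: xf_nz.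
have mmp : forall j, mm V (j + n%:Z) = mm V j by move=> j; exact: (mm_per j hd Htw' nzB nzC nzG).
have llp : forall j, ll V (j + n%:Z) = ll V j by move=> j; exact: (ll_per j hd Htw' nzA nzG).
have xfp : forall j, xf V (j + n%:Z) = xf V j by move=> j; exact: (xf_per j hd Htw' nzC).
have xe : forall j, xinv V j = xf V j by move=> j; exact: (xform (cdV j)).1.
have E1 : forall i, xinv (pentagram V) i = xinv V (i-1) * (mm V (i-2) / mm V i).
  by move=> i; rewrite mulrA; apply: xrel.
have E2 : forall i, yinv (pentagram V) i = yinv V i * (ll V (i-1) / ll V (i+1)).
  by move=> i; rewrite mulrA; apply: yrel.
split.
  rewrite /O_n (eq_bigr _ (fun i _ => E1 i%:Z)).
  transitivity (\prod_(1 <= i < n.+1) xinv V (i%:Z - 1)).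
    apply: (@prod_tel _ (fun i => xinv V (i - 1)) (fun i => mm V (i-2) / mm V i) (fun j => mm V j * mm V (j-1))).
    - by move=> k; rewrite mulf_neq0.
    - move=> i /=; rewrite (_ : i - 1 - 1 = i - 2); last by ring.
      field; by rewrite !mmnz.
    - by rewrite /= -[in LHS](add0r n%:Z) mmp (_ : n%:Z - 1 = -1 + n%:Z) ?mmp //; ring.
  have := shift1 (xinv V) n.
  rewrite (_ : xinv V n%:Z = xinv V 0%:Z); last by rewrite !xe -[in LHS](add0r n%:Z) xfp.
  rewrite [in RHS]mulrC => h; have nz0 : xinv V 0%:Z != 0 by rewrite xe.
  exact: (mulIf nz0 h).
split.
  rewrite /E_n (eq_bigr _ (fun i _ => E2 i%:Z)).
  apply: (@prod_tel _ (fun i => yinv V i) (fun i => ll V (i-1) / ll V (i+1)) (fun j => ll V j * ll V (j+1))).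
  - by move=> k; rewrite mulf_neq0.
  - move=> i /=; rewrite (_ : i - 1 + 1 = i); last by ring.
    field; by rewrite !llnz.
  - by rewrite /= -[in LHS](add0r n%:Z) llp (_ : n%:Z + 1 = 1 + n%:Z) ?llp //; ring.
move=> hodd.
have [k hk] : exists k, n = (2 * k)%N.
  by exists n./2; rewrite -{1}(odd_double_half n) (negbTE hodd) add0n -mul2n.
have hkz : n%:Z = 2 * k%:Z by rewrite hk; lia.
rewrite /O_half /E_half hk !prod_even !prod_odd.
split.
  rewrite [in RHS]addrC; congr (_ + _).
  - rewrite (eq_bigr _ (fun j _ => E1 (2 * j%:Z))).
    apply: (@prod_tel _ (fun j => xinv V (2*j - 1)) (fun j => mm V (2*j-2) / mm V (2*j)) (fun j => mm V (2*j))).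
    + by move=> j /=; exact: mmnz.
    + by move=> i /=; congr (mm V _ / mm V _); ring.
    + by rewrite /= (_ : 2 * k%:Z = 2 * 0%:Z + n%:Z) ?mmp //; lia.
  - rewrite (eq_bigr (fun j => xinv V (2 * (j%:Z - 1)) * (mm V (2*j%:Z-1-2) / mm V (2*j%:Z-1)))); last first.
      by move=> j _; rewrite E1; congr (xinv V _ * _); ring.
    transitivity (\prod_(1 <= j < k.+1) xinv V (2 * (j%:Z - 1))).
      apply: (@prod_tel _ (fun j => xinv V (2 * (j-1))) (fun j => mm V (2*j-1-2) / mm V (2*j-1)) (fun j => mm V (2*j-1))).
      + by move=> j /=; exact: mmnz.
      + by move=> i /=; congr (mm V _ / mm V _); ring.
      + by rewrite /= (_ : 2 * k%:Z - 1 = 2 * 0%:Z - 1 + n%:Z) ?mmp //; lia.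
    have := shift1 (fun j => xinv V (2 * j)) k; rewrite /=.
    rewrite (_ : xinv V (2 * k%:Z) = xinv V (2 * 0%:Z)); last first.
      by rewrite !xe (_ : 2 * k%:Z = 2*0%:Z + n%:Z) ?xfp //; lia.
    rewrite [in RHS]mulrC => h; have nz0 : xinv V (2 * 0%:Z) != 0 by rewrite xe.
    exact: (mulIf nz0 h).
congr (_ + _).
- rewrite (eq_bigr _ (fun j _ => E2 (2 * j%:Z))).
  apply: (@prod_tel _ (fun j => yinv V (2*j)) (fun j => ll V (2*j-1) / ll V (2*j+1)) (fun j => ll V (2*j+1))).
  + by move=> j /=; exact: llnz.
  + by move=> i /=; congr (ll V _ / ll V _); ring.
  + by rewrite /= (_ : 2*k%:Z + 1 = 2*0%:Z + 1 + n%:Z) ?llp //; lia.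
- rewrite (eq_bigr _ (fun j _ => E2 (2 * j%:Z - 1))).
  apply: (@prod_tel _ (fun j => yinv V (2*j-1)) (fun j => ll V (2*j-1-1) / ll V (2*j-1+1)) (fun j => ll V (2*j))).
  + by move=> j /=; exact: llnz.
  + by move=> i /=; congr (ll V _ / ll V _); ring.
  + by rewrite /= (_ : 2*k%:Z = 2*0%:Z + n%:Z) ?llp //; lia.
Qed.
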